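(* For every forward trie $\mathsf{T}_f$ with $n$ nodes, over any alphabet, the suffix array of $\mathsf{T}_f$ has size $O(n^2)$. Moreover, there exist forward tries $\mathsf{T}_f$ with $n$ nodes, for arbitrarily large $n$ and over an alphabet of constant size, whose suffix array has size $\Omega(n^2)$.
   Context: An alphabet $\Sigma$ is a finite ordered set of characters. A forward trie $\mathsf{T}_f$ is a rooted tree with $n$ nodes in which every edge is directed from parent to child and labeled by a single character of $\Sigma$, such that the edges leaving any node carry pairwise distinct labels. For nodes $u,v$ with $u$ an ancestor of $v$ (possibly $u=v$), $\mathrm{str}_f(u,v)$ is the string of labels read along the downward path from $u$ to $v$. Define $\mathrm{Suffix}(\mathsf{T}_f)=\{\mathrm{str}_f(u,\ell): \ell \text{ a leaf},\ u \text{ an ancestor of } \ell\}$. For a finite set $S$ of strings, its compact tree is obtained from the trie of all prefixes of strings in $S$ by deleting every non-root node that has exactly one child and merging its two incident edges into one edge labeled by the concatenation of their labels. The suffix tree $\mathsf{STree}(\mathsf{T}_f)$ is the compact tree of $\mathrm{Suffix}(\mathsf{T}_f)$. The suffix array of $\mathsf{T}_f$ is the array listing the leaves of $\mathsf{STree}(\mathsf{T}_f)$ in lexicographic order of the strings they spell; its size is the number of leaves of $\mathsf{STree}(\mathsf{T}_f)$. *)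

(* Defs.v *)
From mathcomp Require Import all_boot.
Set Implicit Arguments. Unset Strict Implicit. Unset Printing Implicit Defensive.

(* A forward trie is represented by the (duplicate-free) list of the strings
   spelled from the root to each of its nodes: since edges leaving a node carry
   pairwise distinct labels, a node is determined by this string, and the set
   of such strings is nonempty (contains the root's string [::]) and closed
   under prefixes.  The number of nodes n is [size T]. *)
Definition is_trie (Sigma : eqType) (T : seq (seq Sigma)) : bool :=
  [&& uniq T, [::] \in T & all (fun w => all (fun k => take k w \in T) (iota 0 (size w))) T].

Section Suffix.
Variable Sigma : eqType.
Implicit Types (T S : seq (seq Sigma)) (u v w : seq Sigma).

Definition ancestor u v := prefix u v.

(* str_f(u,v) for an ancestor u of v: labels along the downward path. *)
Definition str_f u v := drop (size u) v.

Definition trie_leaves T : seq (seq Sigma) :=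
  [seq l <- T | ~~ has (fun v => (v != l) && ancestor l v) T].

Definition Suffix T : seq (seq Sigma) :=
  undup (flatten [seq [seq str_f u l | u <- T & ancestor u l] | l <- trie_leaves T]).

Definition prefix_trie S : seq (seq Sigma) :=
  undup [seq take k s | s <- S, k <- iota 0 (size s).+1].

Definition nchildren S p : nat :=
  count (fun q => (size q == (size p).+1) && prefix p q) (prefix_trie S).

(* Nodes of the compact tree of S: the root together with the nodes of the
   prefix trie that do not have exactly one child (the deleted nodes are the
   non-root nodes with exactly one child). *)
Definition compact_nodes S : seq (seq Sigma) :=
  [seq p <- prefix_trie S | (p == [::]) || (nchildren S p != 1)].

Definition compact_leaves S : seq (seq Sigma) :=
  [seq p <- compact_nodes S |
     ~~ has (fun q => (q != p) && prefix p q) (compact_nodes S)].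

(* STree(T_f) is the compact tree of Suffix(T_f); the suffix array lists its
   leaves, so its size is the number of leaves. *)
Definition suffix_array_size T : nat := size (compact_leaves (Suffix T)).

End Suffix.

(* Main.v *)
Require Import Defs.
From mathcomp Require Import all_boot zify.

Section Gen.
Variable Sigma : eqType.
Implicit Types (S : seq (seq Sigma)) (p q s t w : seq Sigma).

Lemma prefix_anti p q : prefix p q -> prefix q p -> p = q.
Proof.
move=> /prefixP [r ->] /size_prefix; rewrite size_cat.
case: r => [|x r] /=; first by rewrite cats0.
move=> H; exfalso; lia.
Qed.

Lemma mem_prefix_trie S q :
  (q \in prefix_trie S) = has (fun s => prefix q s) S.
Proof.
rewrite /prefix_trie mem_undup; apply/allpairsPdep/hasP.
- move=> [s [k [sS _ ->]]]; exists s => //; exact: prefix_take.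
- move=> [s sS /prefixP [r Es]]; exists s, (size q); split => //=.
    by rewrite -/(iota 0 (size s).+1) mem_iota Es size_cat /=; lia.
  by rewrite Es take_size_cat.
Qed.

Lemma leaf_in S w : w \in S -> (forall s, s \in S -> prefix w s -> s = w) ->
  w \in compact_leaves S.
Proof.
move=> wS H.
have PT : w \in prefix_trie S by rewrite mem_prefix_trie; apply/hasP; exists w => //; exact: prefix_refl.
have ext : forall q, q \in prefix_trie S -> prefix w q -> q = w.
  move=> q; rewrite mem_prefix_trie => /hasP [s sS qs] wq.
  have := H s sS (prefix_trans wq qs) => Esw.
  by apply: prefix_anti => //; rewrite -Esw.
have CN : w \in compact_nodes S.
  rewrite /compact_nodes mem_filter PT andbT; apply/orP; right.
  rewrite /nchildren.
  suff -> : count (fun q => (size q == (size w).+1) && prefix w q) (prefix_trie S) = 0 by [].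
  apply/eqP; rewrite -leqn0 leqNgt -has_count; apply/hasPn => q qin.
  apply/negP => /andP [/eqP Sq wq]; have := ext q qin wq => Eq.
  by move: Sq; rewrite Eq; lia.
rewrite /compact_leaves mem_filter CN andbT; apply/hasPn => q qin.
apply/negP => /andP [/eqP qw wq]; apply: qw; apply: ext wq.
by move: qin; rewrite /compact_nodes mem_filter => /andP [].
Qed.

Lemma max_ext S p s : s \in S -> prefix p s ->
  exists2 s', s' \in S & prefix p s' /\ forall t, t \in S -> prefix s' t -> size t <= size s'.
Proof.
set K := \max_(t <- S) size t.
have HK : forall t, t \in S -> size t <= K by move=> t tS; exact: (@leq_bigmax_seq _ _ xpredT (fun t => size t) t tS).
move: {2}(K - size s) (leqnn (K - size s)) => k.
elim: k s => [|k IH] s kk sS ps.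
  exists s => //; split => // t tS st; have := HK t tS; lia.
case: (boolP (has (fun t => prefix s t && (size s < size t)) S)).
  move=> /hasP [t tS /andP [st lt]].
  apply: (IH t) => //; last exact: prefix_trans ps st.
  have := HK t tS; lia.
move=> /hasPn Hn; exists s => //; split => // t tS st.
have := Hn t tS; rewrite st /=; lia.
Qed.

Lemma leaf_mem S p : p \in compact_leaves S -> p \in S.
Proof.
rewrite /compact_leaves mem_filter => /andP [Hn CN].
have : p \in prefix_trie S by move: CN; rewrite /compact_nodes mem_filter => /andP [].
rewrite mem_prefix_trie => /hasP [s0 s0S ps0].
have [s' s'S [ps' Hmax]] := @max_ext S p s0 s0S ps0.
have CN' : s' \in compact_nodes S.
  rewrite /compact_nodes mem_filter; apply/andP; split.
    apply/orP; right; rewrite /nchildren.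
    suff -> : count (fun q => (size q == (size s').+1) && prefix s' q) (prefix_trie S) = 0 by [].
    apply/eqP; rewrite -leqn0 leqNgt -has_count; apply/hasPn => q.
    rewrite mem_prefix_trie => /hasP [t tS qt].
    apply/negP => /andP [/eqP Sq s'q].
    have := Hmax t tS (prefix_trans s'q qt); have := size_prefix qt; lia.
  by rewrite mem_prefix_trie; apply/hasP; exists s' => //; exact: prefix_refl.
case: (eqVneq s' p) => [<- //|ne].
by move/hasPn: Hn => /(_ s' CN'); rewrite ne ps'.
Qed.

Lemma cl_size S : size (compact_leaves S) <= size (undup S).
Proof.
apply: uniq_leq_size.
  by rewrite /compact_leaves /compact_nodes /prefix_trie !filter_uniq // undup_uniq.
by move=> p /leaf_mem; rewrite mem_undup.
Qed.

End Gen.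

Lemma sumn_le (A : Type) (f : A -> nat) b s : (forall x, f x <= b) -> sumn (map f s) <= size s * b.
Proof. move=> H; elim: s => //= x s IH; rewrite mulSn; apply: leq_add => //. Qed.

Lemma suffix_size (Sigma : eqType) (T : seq (seq Sigma)) : size (Suffix T) <= size T ^ 2.
Proof.
rewrite /Suffix; apply: leq_trans (size_undup _) _; rewrite size_flatten /shape -map_comp.
apply: (@leq_trans (size (trie_leaves T) * size T)).
  by apply: sumn_le => x /=; rewrite size_map size_filter count_size.
rewrite expnS expn1 leq_mul2r; apply/orP; right.
by rewrite /trie_leaves size_filter count_size.
Qed.

Lemma part1 (Sigma : finType) (T : seq (seq Sigma)) :
  is_trie T -> suffix_array_size T <= 1 * (size T) ^ 2.
Proof.
move=> _; rewrite mul1n /suffix_array_size.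
apply: (leq_trans (@cl_size _ (Suffix T))); rewrite undup_id ?undup_uniq //.
exact: suffix_size.
Qed.

Definition Q (s : seq bool) := (count id s <= 2) && ((count id s == 2) ==> last false s).

Lemma G (w s : seq bool) : count id w = 2 -> Q s -> prefix w s -> s = w.
Proof.
move=> cw /andP [c2 l2] /prefixP [r Es].
move: c2 l2; rewrite Es count_cat cw => c2.
have cr : count id r = 0 by lia.
rewrite cr addn0 eqxx /= last_cat.
clear c2; case: r Es cr => [|y r] Es cr; first by rewrite cats0.
move=> lt; exfalso.
have : last y r \in y :: r by exact: mem_last.
move=> H; move/eqP: cr; rewrite -leqn0 leqNgt -has_count => /hasPn /(_ _ H).
by move: lt => /= ->.
Qed.

Lemma Q_drop k s : Q s -> Q (drop k s).
Proof.
move=> /andP [c2 l2].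
have cd : count id (drop k s) <= count id s.
  by rewrite -{2}(cat_take_drop k s) count_cat leq_addl.
apply/andP; split; first lia.
apply/implyP => /eqP e2.
have cs : count id s = 2 by lia.
move: l2; rewrite cs eqxx /= -{1}(cat_take_drop k s) last_cat.
case E : (drop k s) e2 => [|y d] //=.
Qed.

Lemma mem_iota0S x n : (x \in iota 0 n.+1) = (x <= n).
Proof. by rewrite mem_iota add0n ltnS. Qed.

Section Constr.
Variable N : nat.

Definition lf j : seq bool := nseq N false ++ true :: (nseq j false ++ [:: true]).
Definition wd i j : seq bool := nseq i false ++ true :: (nseq j false ++ [:: true]).
Definition Ls := [seq lf j | j <- iota 0 N.+1].
Definition Tr := prefix_trie Ls.

Lemma size_lf j : size (lf j) = N + j + 2.
Proof. rewrite /lf size_cat size_nseq /= size_cat size_nseq /=; lia. Qed.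

Lemma count_wd i j : count id (wd i j) = 2.
Proof. by rewrite /wd count_cat count_nseq /= count_cat count_nseq. Qed.

Lemma Q_lf j : Q (lf j).
Proof.
by rewrite /Q [count _ _]count_wd /= /lf last_cat /= last_cat.
Qed.

Lemma index_wd i j : index true (wd i j) = i.
Proof. by elim: i => //= i ->. Qed.

Lemma Tr_trie : is_trie Tr.
Proof.
apply/and3P; split.
- exact: undup_uniq.
- by rewrite mem_prefix_trie; apply/hasP; exists (lf 0); [apply/mapP; exists 0; rewrite ?mem_iota |exact: prefix0s].
- apply/allP => w; rewrite mem_prefix_trie => /hasP [s sS ws].
  apply/allP => k _; rewrite mem_prefix_trie; apply/hasP; exists s => //.
  exact: prefix_trans (prefix_take _ _) ws.
Qed.

Lemma in_Tr q : q \in Tr -> exists2 j, j <= N & prefix q (lf j).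
Proof.
rewrite mem_prefix_trie => /hasP [s /mapP [j jin ->] qs]; exists j => //.
by move: jin; rewrite mem_iota; lia.
Qed.

Lemma lf_Tr j : j <= N -> lf j \in Tr.
Proof.
move=> jN; rewrite mem_prefix_trie; apply/hasP; exists (lf j); last exact: prefix_refl.
by apply/mapP; exists j => //; rewrite mem_iota; lia.
Qed.

Lemma size_Tr : size Tr <= 3 * N + 4.
Proof.
have -> : 3 * N + 4 = size ([seq take k (lf N) | k <- iota 0 (size (lf N)).+1] ++ Ls).
  by rewrite size_cat !size_map !size_iota size_lf; lia.
apply: uniq_leq_size; first exact: undup_uniq.
move=> q /in_Tr [j jN qj]; rewrite mem_cat.
case: (eqVneq q (lf j)) => [->|ne].
  by apply/orP; right; apply/mapP; exists j => //; rewrite mem_iota; lia.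
apply/orP; left; apply/mapP; exists (size q).
  by rewrite mem_iota0S; have := size_prefix qj; rewrite !size_lf; lia.
have sq : size q < size (lf j).
  rewrite ltn_neqAle size_prefix // andbT; apply/negP => /eqP E.
  by move: qj; rewrite prefixE E take_size => /eqP Eq; rewrite Eq eqxx in ne.
suff Eq : take (size q) (lf j) = take (size q) (lf N).
  by rewrite -Eq; move: qj; rewrite prefixE => /eqP.
have -> : lf j = (nseq N false ++ true :: nseq j false) ++ [:: true] by rewrite /lf -catA.
have -> : lf N = (nseq N false ++ true :: nseq j false) ++ (nseq (N - j) false ++ [:: true]).
  rewrite /lf -catA /=; congr (_ ++ _ :: _); rewrite catA -nseqD; congr (nseq _ _ ++ _); lia.
have sz : size q <= size (nseq N false ++ true :: nseq j false).
  by move: sq; rewrite size_lf size_cat size_nseq /= size_nseq; lia.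
by rewrite (takel_cat _ sz) (takel_cat _ sz).
Qed.

Lemma Ls_uniq : uniq Ls.
Proof.
rewrite map_inj_in_uniq ?iota_uniq // => a b _ _ E.
by have := congr1 size E; rewrite !size_lf; lia.
Qed.

Lemma N_Tr : N < size Tr.
Proof.
have -> : N.+1 = size Ls by rewrite size_map size_iota.
apply: uniq_leq_size; first exact: Ls_uniq.
by move=> q /mapP [j jin ->]; apply: lf_Tr; move: jin; rewrite mem_iota; lia.
Qed.

Lemma lf_leaf j : j <= N -> lf j \in trie_leaves Tr.
Proof.
move=> jN; rewrite /trie_leaves mem_filter lf_Tr // andbT.
apply/hasPn => v /in_Tr [j' _ vj']; apply/negP => /andP [ne lv].
have E : lf j' = lf j by apply: G; [exact: count_wd | exact: Q_lf | exact: prefix_trans lv vj'].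
move: ne; rewrite E in vj'; by rewrite (@prefix_anti _ _ _ lv vj') eqxx.
Qed.

Lemma wd_Suffix i j : i <= N -> j <= N -> wd i j \in Suffix Tr.
Proof.
move=> iN jN; rewrite /Suffix mem_undup; apply/flatten_mapP; exists (lf j); first exact: lf_leaf.
apply/mapP; exists (take (N - i) (lf j)).
  rewrite mem_filter /ancestor prefix_take /= mem_prefix_trie; apply/hasP; exists (lf j).
    by apply/mapP; exists j => //; rewrite mem_iota; lia.
  exact: prefix_take.
rewrite /str_f size_takel; last by rewrite size_lf; lia.
rewrite /lf; have -> : nseq N false = nseq (N - i) false ++ nseq i false by rewrite -nseqD subnK.
by rewrite -catA drop_size_cat ?size_nseq.
Qed.

Lemma Suffix_Q s : s \in Suffix Tr -> Q s.
Proof.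
rewrite /Suffix mem_undup => /flatten_mapP [l lL /mapP [u _ ->]].
rewrite /str_f; apply: Q_drop.
move: lL; rewrite /trie_leaves mem_filter => /andP [Hn /in_Tr [j' jN lj']].
case: (eqVneq (lf j') l) => [<-|ne]; first exact: Q_lf.
by move/hasPn: Hn => /(_ _ (lf_Tr _ jN)); rewrite /ancestor ne lj'.
Qed.

Definition W := [seq wd i j | i <- iota 0 N.+1, j <- iota 0 N.+1].

Lemma W_uniq : uniq W.
Proof.
apply: allpairs_uniq; rewrite ?iota_uniq // => [[a b]] [c d] _ _ /= E.
have ac : a = c by have := congr1 (index true) E; rewrite !index_wd.
have := congr1 size E; rewrite /wd !size_cat !size_nseq /= !size_cat !size_nseq ac => H.
by congr (_, _); lia.
Qed.

Lemma part2 : N.+1 ^ 2 <= suffix_array_size Tr.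
Proof.
have -> : N.+1 ^ 2 = size W by rewrite size_allpairs size_iota.
apply: uniq_leq_size; first exact: W_uniq.
move=> x /allpairsP [[i j] /= [iin jin ->]].
move: iin jin; rewrite !mem_iota0S => iN jN.
apply: leaf_in; first by apply: wd_Suffix; lia.
move=> s sS ps; apply: G ps; [exact: count_wd | exact: Suffix_Q].
Qed.
End Constr.

Theorem corollary1 :
  (exists c : nat, forall (Sigma : finType) (T : seq (seq Sigma)),
      is_trie T -> suffix_array_size T <= c * (size T) ^ 2)
  /\
  (exists (Sigma : finType) (c : nat), 0 < c /\
     forall N : nat, exists T : seq (seq Sigma),
       [/\ is_trie T, N <= size T & (size T) ^ 2 <= c * suffix_array_size T]).
Proof.
split; first by exists 1; exact: part1.
exists bool, 16; split => // N; exists (Tr N); split.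
- exact: Tr_trie.
- exact: ltnW (N_Tr N).
- have h1 := size_Tr N; have h2 := part2 N.
  apply: (@leq_trans ((3 * N + 4) ^ 2)); first by rewrite leq_exp2r.
  apply: (@leq_trans (16 * N.+1 ^ 2)); last by rewrite leq_mul2l h2 orbT.
  rewrite !expnS !expn0 !muln1; nia.
Qed.
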